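(* Let $\mathbf{C}$ and $\mathbf{D}$ be chain complexes of finite-dimensional real inner product spaces (concentrated in degrees $n\ge 0$), and let $\Phi:\mathbf{D}\to\mathbf{C}$, $\Psi:\mathbf{C}\to\mathbf{D}$ be chain maps together with a chain homotopy $h$ forming a deformation retract, i.e. $\Psi\Phi=\mathrm{id}_{\mathbf{D}}$ and $\partial h+h\partial=\mathrm{id}_{\mathbf{C}}-\Phi\Psi$. Then there exist a base of $\mathbf{C}$ and a Morse matching $\mathcal{M}$ on the resulting based chain complex such that the deformation retract $(\Psi,\Phi)$ is equivalent to the Morse retraction $(\Psi^{\mathcal{M}},\Phi^{\mathcal{M}})$ of $\mathcal{M}$ (a deformation retract $\mathbf{C}^{\mathcal M}\rightleftarrows\mathbf{C}$ of the same complex $\mathbf{C}$).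
   Context: A based chain complex of finite type over $\mathbb{R}$ is a chain complex $(\mathbf{C},\partial)$ of finite-dimensional real vector spaces $\mathbf{C}_n$, $n\ge0$, with pairwise disjoint finite index sets $I=\{I_n\}$ and a direct sum decomposition $\mathbf{C}_n=\bigoplus_{\alpha\in I_n}C_\alpha$ (elements of $I_n$ are called $n$-cells). For $\alpha\in I_n,\beta\in I_{n-1}$ let $\partial_{\beta,\alpha}=\pi_\beta\circ\partial_n\circ i_\alpha:C_\alpha\to C_\beta$, with $i_\alpha$ the inclusion of a summand and $\pi_\beta$ the projection onto a summand along the others. The graph $\mathcal G(\mathbf C)$ has vertices $\bigcup_n I_n$ and an edge $\alpha\to\beta$ whenever $\partial_{\beta,\alpha}\ne0$. A Morse matching is a set $M$ of edges such that (1) every vertex lies on at most one edge of $M$; (2) $\partial_{\beta,\alpha}$ is an isomorphism for every $\alpha\to\beta$ in $M$; (3) for each $n$, the relation on $I_n$ given by $\alpha\succ\beta$ iff there is a directed path from $\alpha$ to $\beta$ in $\mathcal G(\mathbf C)^M$ (the graph with the edges of $M$ reversed) is a partial order. Unmatched cells are critical; their set is $M^0$. The index $\mathcal I(\gamma)$ of a directed path $\gamma=(\sigma_0,\dots,\sigma_m)$ in $\mathcal G(\mathbf C)^M$ is the composite of the maps of its steps, where a non-reversed step $\sigma_i\to\sigma_{i+1}$ contributes $\partial_{\sigma_{i+1},\sigma_i}$ and a reversed matched edge contributes $-\partial_{\sigma_i,\sigma_{i+1}}^{-1}$ (the trivial path gives the identity); $\Gamma_{\beta,\alpha}=\sum_\gamma\mathcal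 I(\gamma):C_\alpha\to C_\beta$ over all paths from $\alpha$ to $\beta$ (zero if none). The Morse complex is $\mathbf C^M_n=\bigoplus_{\alpha\in I_n\cap M^0}C_\alpha$ with boundary $x\mapsto\sum_{\beta\in M^0\cap I_{n-1}}\Gamma_{\beta,\alpha}(x)$ for $x\in C_\alpha$, $\alpha\in M^0\cap I_n$. The Morse retraction consists of the chain maps $\Phi^M:\mathbf C^M\to\mathbf C$, $\Phi^M(x)=\sum_{\beta\in I_n}\Gamma_{\beta,\alpha}(x)$ for $x\in C_\alpha$, $\alpha\in M^0\cap I_n$, and $\Psi^M:\mathbf C\to\mathbf C^M$, $\Psi^M(x)=\sum_{\beta\in M^0\cap I_n}\Gamma_{\beta,\alpha}(x)$ for $x\in C_\alpha$, $\alpha\in I_n$; it is a deformation retract. Two deformation retracts $(\Psi:\mathbf C\to\mathbf D,\Phi:\mathbf D\to\mathbf C)$ and $(\Psi':\mathbf C'\to\mathbf D',\Phi':\mathbf D'\to\mathbf C')$ are equivalent if there are chain isomorphisms $f:\mathbf D\to\mathbf D'$, $g:\mathbf C\to\mathbf C'$ with $f\Psi=\Psi' g$ and $g\Phi=\Phi' f$. *)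

(* Defs.v *)
(* matrices over a field, row-vector convention
   (a linear map V -> W is a matrix A, acting by x |-> x *m A,
    so the composite "g after f" is the matrix product (f *m g)). *)
From HB Require Import structures.
From mathcomp Require Import all_boot all_order all_algebra.
From mathcomp Require Import boolp classical_sets fsbigop reals.
Set Implicit Arguments.
Unset Strict Implicit.
Unset Printing Implicit Defensive.
Import Order.TTheory GRing.Theory Num.Theory.
Local Open Scope ring_scope.

(* C_n = 'rV_(cdim n);  bd n : C_(n+1) -> C_n  (so bd n = d_(n+1)).    *)
Record chain_complex (R : fieldType) := ChainComplex {
  cdim : nat -> nat;
  bd : forall n, 'M[R]_(cdim n.+1, cdim n) }.

Definition is_complex (R : fieldType) (C : chain_complex R) :=
  forall n, bd C n.+1 *m bd C n = 0.

Definition is_chain_map (R : fieldType) (C D : chain_complex R)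
  (f : forall n, 'M[R]_(cdim C n, cdim D n)) :=
  forall n, bd C n *m f n = f n.+1 *m bd D n.

Definition is_chain_iso (R : fieldType) (C D : chain_complex R)
  (f : forall n, 'M[R]_(cdim C n, cdim D n)) :=
  is_chain_map f /\ forall n, row_free (f n) && row_full (f n).

Definition equiv_retracts (R : fieldType) (C D C' D' : chain_complex R)
  (Psi : forall n, 'M[R]_(cdim C n, cdim D n))
  (Phi : forall n, 'M[R]_(cdim D n, cdim C n))
  (Psi' : forall n, 'M[R]_(cdim C' n, cdim D' n))
  (Phi' : forall n, 'M[R]_(cdim D' n, cdim C' n)) :=
  exists (f : forall n, 'M[R]_(cdim D n, cdim D' n))
         (g : forall n, 'M[R]_(cdim C n, cdim C' n)),
    [/\ is_chain_iso f, is_chain_iso g,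
        (forall n, Psi n *m f n = g n *m Psi' n) &
        (forall n, Phi n *m g n = f n *m Phi' n)].

(* A base of C: for every n, finitely many cells (n, i), i < ncell n,  *)
(* and a direct sum decomposition C_n = (+)_i C_(n,i), given by the    *)
(* inclusions i_(n,i) : C_(n,i) -> C_n and projections pi_(n,i) :      *)
(* C_n -> C_(n,i) (along the other summands), where C_(n,i) is a       *)
(* space of dimension cdimc n i.                                       *)
Record base (R : fieldType) (C : chain_complex R) := Base {
  ncell : nat -> nat;
  cdimc : nat -> nat -> nat;
  incl : forall n i, 'M[R]_(cdimc n i, cdim C n);
  proj : forall n i, 'M[R]_(cdim C n, cdimc n i);
  incl_proj : forall n i j : nat, (i < ncell n)%N -> (j < ncell n)%N ->
    incl n i *m proj n j =
      if i == j then conform_mx 0 (1%:M : 'M[R]_(cdimc n i)) else 0;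
  sum_proj_incl : forall n, \sum_(i < ncell n) proj n i *m incl n i = 1%:M }.

(* cells: a = (n, i) is the i-th cell of degree n (valid iff i < ncell n);
   the index sets I_n = {(n,i) | i < ncell n} are pairwise disjoint. *)
Definition cell := (nat * nat)%type.

Section Morse.
Variables (R : fieldType) (C : chain_complex R) (B : base C).

Definition valid_cell (a : cell) : bool := (a.2 < ncell B a.1)%N.
Definition cdeg (a : cell) : nat := a.1.
Definition mdim (a : cell) : nat := cdimc B a.1 a.2.

(* d_(b,a) = pi_b o d o i_a : C_a -> C_b   (nonzero only if deg a = deg b + 1) *)
Definition dmat (a b : cell) : 'M[R]_(mdim a, mdim b) :=
  if a.1 == b.1.+1 then
    incl B a.1 a.2 *m conform_mx 0 (bd C b.1) *m proj B b.1 b.2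
  else 0.

Definition edge (a b : cell) : bool :=
  [&& valid_cell a, valid_cell b, a.1 == b.1.+1 & dmat a b != 0].

Variable M : rel cell.

Definition gM_edge (a b : cell) : bool := (edge a b && ~~ M a b) || M b a.

(* directed path from a to b in G(C)^M: the vertex list is a :: s *)
Definition gM_path (a : cell) (s : seq cell) (b : cell) : Prop :=
  path gM_edge a s /\ last a s = b.

Definition reach (a b : cell) : Prop := exists s, gM_path a s b.

Definition morse_matching : Prop :=
  [/\ (forall a b, M a b -> edge a b),
      (forall a b c d, M a b -> M c d ->
          [|| a == c, a == d, b == c | b == d] -> (a, b) = (c, d)),
      (forall a b, M a b -> row_free (dmat a b) && row_full (dmat a b)) &
      (forall n, 
        [/\ (forall a, valid_cell a -> a.1 = n -> reach a a),
            (forall a b, valid_cell a -> valid_cell b -> a.1 = n -> b.1 = n ->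
                reach a b -> reach b a -> a = b) &
            (forall a b c, valid_cell a -> valid_cell b -> valid_cell c ->
                a.1 = n -> b.1 = n -> c.1 = n ->
                reach a b -> reach b c -> reach a c)])].

Definition critical (a : cell) : bool :=
  valid_cell a && `[< ~ exists b, M a b \/ M b a >].

Definition smat (a b : cell) : 'M[R]_(mdim a, mdim b) :=
  if M b a then - pinvmx (dmat b a) else dmat a b.

Fixpoint pidx (a : cell) (s : seq cell) (b : cell) : 'M[R]_(mdim a, mdim b) :=
  match s with
  | [::] => if a == b then conform_mx 0 (1%:M : 'M[R]_(mdim a)) else 0
  | c :: s' => smat a c *m pidx c s' b
  end.

Definition Gamma (a b : cell) : 'M[R]_(mdim a, mdim b) :=
  \sum_(s \in [set s | gM_path a s b]) pidx a s b.

Definition crit_list (n : nat) : seq nat :=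
  [seq i <- iota 0 (ncell B n) | critical (n, i)].

Definition cdimM (n : nat) : nat := sumn [seq mdim (n, i) | i <- crit_list n].

(* position of the block of the critical cell (n,i) inside C^M_n *)
Definition offM (n i : nat) : nat :=
  sumn [seq mdim (n, j) | j <- crit_list n & (j < i)%N].

Definition inclM (n i : nat) : 'M[R]_(mdim (n, i), cdimM n) :=
  \matrix_(r, c) ((c : nat) == offM n i + r)%:R.

Definition bdM (n : nat) : 'M[R]_(cdimM n.+1, cdimM n) :=
  \sum_(i <- crit_list n.+1) \sum_(j <- crit_list n)
     (inclM n.+1 i)^T *m Gamma (n.+1, i) (n, j) *m inclM n j.

Definition morse_complex : chain_complex R := ChainComplex bdM.

Definition morse_Phi (n : nat) : 'M[R]_(cdimM n, cdim C n) :=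
  \sum_(i <- crit_list n) \sum_(j < ncell B n)
     (inclM n i)^T *m Gamma (n, i) (n, val j) *m incl B n j.

Definition morse_Psi (n : nat) : 'M[R]_(cdim C n, cdimM n) :=
  \sum_(j < ncell B n) \sum_(i <- crit_list n)
     proj B n j *m Gamma (n, val j) (n, i) *m inclM n i.

End Morse.

(* Main.v *)
Require Import Defs.
From HB Require Import structures.
From mathcomp Require Import all_boot all_order all_algebra.
From mathcomp Require Import boolp classical_sets fsbigop reals.
Import GRing.Theory Num.Theory.
Local Open Scope ring_scope.
From mathcomp Require Import zify.
Set Implicit Arguments.
Unset Strict Implicit.
Unset Printing Implicit Defensive.

Section Main.
Variables (R : fieldType) (C D : chain_complex R)
  (Phi : forall n, 'M[R]_(cdim D n, cdim C n))
  (Psi : forall n, 'M[R]_(cdim C n, cdim D n))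
  (h : forall n, 'M[R]_(cdim C n, cdim C n.+1)).
Hypotheses (cC : is_complex C) (cD : is_complex D)
  (chPhi : is_chain_map Phi) (chPsi : is_chain_map Psi)
  (PhiPsi : forall n, Phi n *m Psi n = 1%:M)
  (hyp0 : h 0%N *m bd C 0%N = 1%:M - Psi 0%N *m Phi 0%N)
  (hypS : forall n, bd C n *m h n + h n.+1 *m bd C n.+1 = 1%:M - Psi n.+1 *m Phi n.+1).

Definition Pi n := Psi n *m Phi n.
Definition K n := kermx (Psi n).
Definition SZ n := K n.+1 *m bd C n.
Definition rX n := \rank (Phi n).
Definition bX n : 'M_(rX n, cdim C n) := row_base (Phi n).
Definition rZ n := \rank (SZ n).
Definition bZ n : 'M_(rZ n, cdim C n) := row_base (SZ n).
Definition Ulift n : 'M_(rZ n, cdim C n.+1) := bZ n *m pinvmx (SZ n) *m K n.+1.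
Definition rU n := match n with 0 => 0%N | m.+1 => rZ m end.
Definition bU n : 'M_(rU n, cdim C n) :=
  match n return 'M_(rU n, cdim C n) with 0 => 0 | m.+1 => Ulift m end.
Definition pX n : 'M_(cdim C n, rX n) := Pi n *m pinvmx (bX n).
Definition pU n : 'M_(cdim C n, rU n) :=
  match n return 'M_(cdim C n, rU n) with
  | 0 => 0
  | m.+1 => (1%:M - Pi m.+1) *m bd C m *m pinvmx (bZ m) end.
Definition pZ n : 'M_(cdim C n, rZ n) :=
  (1%:M - Pi n - pU n *m bU n) *m pinvmx (bZ n).

Lemma PiPi n : Pi n *m Pi n = Pi n.
Proof. by rewrite /Pi mulmxA -(mulmxA (Psi n)) PhiPsi mulmx1. Qed.
Lemma PhiPi n : Phi n *m Pi n = Phi n.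
Proof. by rewrite /Pi mulmxA PhiPsi mul1mx. Qed.
Lemma subPhi_Pi p n (y : 'M_(p, cdim C n)) : (y <= Phi n)%MS -> y *m Pi n = y.
Proof. by case/submxP=> W ->; rewrite -mulmxA PhiPi. Qed.
Lemma bX_Pi n : bX n *m Pi n = bX n.
Proof. by apply: subPhi_Pi; rewrite /bX eq_row_base. Qed.
Lemma Pi_sub_bX n : (Pi n <= bX n)%MS.
Proof. by rewrite /bX eq_row_base /Pi submxMl. Qed.
Lemma Pi_bX n : Pi n *m pinvmx (bX n) *m bX n = Pi n.
Proof. exact: mulmxKpV (Pi_sub_bX n). Qed.
Lemma bX_pX n : bX n *m pX n = 1%:M.
Proof. by rewrite /pX mulmxA bX_Pi mulmxVp // row_base_free. Qed.
Lemma bZ_pinv n : bZ n *m pinvmx (bZ n) = 1%:M.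
Proof. by rewrite mulmxVp // row_base_free. Qed.
Lemma bZ_sub n : (bZ n <= SZ n)%MS.
Proof. by rewrite /bZ eq_row_base. Qed.
Lemma Pi_bd n : Pi n.+1 *m bd C n = bd C n *m Pi n.
Proof. by rewrite /Pi -mulmxA -chPhi mulmxA -chPsi mulmxA. Qed.
Lemma SZ_Psi n : SZ n *m Psi n = 0.
Proof. by rewrite /SZ -mulmxA chPsi mulmxA /K mulmx_ker mul0mx. Qed.
Lemma bZ_Psi n : bZ n *m Psi n = 0.
Proof. by case/submxP: (bZ_sub n) => W ->; rewrite -mulmxA SZ_Psi mulmx0. Qed.
Lemma bZ_Pi n : bZ n *m Pi n = 0.
Proof. by rewrite /Pi mulmxA bZ_Psi mul0mx. Qed.
Lemma bZ_bd n : bZ n.+1 *m bd C n = 0.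
Proof.
by case/submxP: (bZ_sub n.+1) => W ->; rewrite /SZ -!mulmxA cC !mulmx0.
Qed.
Lemma Ulift_bd n : Ulift n *m bd C n = bZ n.
Proof. by rewrite /Ulift -mulmxA -/(SZ n) mulmxKpV // bZ_sub. Qed.
Lemma bU_Psi n : bU n *m Psi n = 0.
Proof.
case: n => [|n] /=; first by rewrite mul0mx.
by rewrite /Ulift -mulmxA /K mulmx_ker mulmx0.
Qed.
Lemma bU_Pi n : bU n *m Pi n = 0.
Proof. by rewrite /Pi mulmxA bU_Psi mul0mx. Qed.

Lemma exact_gen p n (y : 'M_(p, cdim C n)) :
  y *m Psi n = 0 -> y *m h n *m bd C n = y -> (y <= SZ n)%MS.
Proof.
move=> yPsi yhb.
pose w := y *m h n *m (1%:M - Pi n.+1).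
have wK : (w <= K n.+1)%MS.
  apply/sub_kermxP; rewrite /w -mulmxA mulmxBl mul1mx /Pi -(mulmxA (Psi _)) PhiPsi.
  by rewrite mulmx1 subrr mulmx0.
have -> : y = w *m bd C n.
  rewrite /w -mulmxA mulmxBl mul1mx Pi_bd mulmxBr mulmxA yhb.
  by rewrite /Pi mulmxA yPsi mul0mx subr0.
by rewrite /SZ submxMr.
Qed.

Lemma exact0 p (y : 'M_(p, cdim C 0)) : y *m Psi 0%N = 0 -> (y <= SZ 0)%MS.
Proof.
move=> yP; apply: exact_gen => //.
by rewrite -mulmxA hyp0 mulmxBr mulmx1 mulmxA yP mul0mx subr0.
Qed.

Lemma exactS p n (y : 'M_(p, cdim C n.+1)) :
  y *m Psi n.+1 = 0 -> y *m bd C n = 0 -> (y <= SZ n.+1)%MS.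
Proof.
move=> yP yb; apply: exact_gen => //.
have := congr1 (mulmx y) (hypS n).
rewrite mulmxDr !mulmxA yb mul0mx add0r => ->.
by rewrite mulmxBr mulmx1 mulmxA yP mul0mx subr0.
Qed.


Lemma pU_S n : pU n.+1 = (1%:M - Pi n.+1) *m bd C n *m pinvmx (bZ n).
Proof. by []. Qed.
Lemma bU_S n : bU n.+1 = Ulift n. Proof. by []. Qed.
Lemma pU_0 : pU 0 = 0. Proof. by []. Qed.
Lemma bU_0 : bU 0 = 0. Proof. by []. Qed.

Lemma Pi_Psi n : Pi n *m Psi n = Psi n.
Proof. by rewrite /Pi -mulmxA PhiPsi mulmx1. Qed.

Lemma kill p n (y : 'M_(p, cdim C n)) : y *m Pi n = y ->
  y *m pU n = 0 /\ y *m pZ n = 0.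
Proof.
move=> yP.
have yU : y *m pU n = 0.
  case: n y yP => [|n] y yP; first by rewrite pU_0 mulmx0.
  rewrite pU_S.
  by rewrite !mulmxA mulmxBr mulmx1 yP subrr !mul0mx.
split=> //; rewrite /pZ mulmxA !mulmxBr mulmx1 yP subrr mulmxA yU mul0mx.
by rewrite subr0 mul0mx.
Qed.

Lemma bX_pU n : bX n *m pU n = 0. Proof. by case: (kill (bX_Pi n)). Qed.
Lemma bX_pZ n : bX n *m pZ n = 0. Proof. by case: (kill (bX_Pi n)). Qed.
Lemma bZ_pX n : bZ n *m pX n = 0. Proof. by rewrite /pX mulmxA bZ_Pi mul0mx. Qed.
Lemma bZ_pU n : bZ n *m pU n = 0.
Proof.
case: n => [|n]; first by rewrite pU_0 mulmx0.
by rewrite pU_S !mulmxA mulmxBr mulmx1 bZ_Pi subr0 bZ_bd !mul0mx.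
Qed.
Lemma bZ_pZ n : bZ n *m pZ n = 1%:M.
Proof.
by rewrite /pZ mulmxA !mulmxBr mulmx1 bZ_Pi subr0 mulmxA bZ_pU mul0mx subr0 bZ_pinv.
Qed.
Lemma bU_pX n : bU n *m pX n = 0. Proof. by rewrite /pX mulmxA bU_Pi mul0mx. Qed.
Lemma bU_pU n : bU n *m pU n = 1%:M.
Proof.
case: n => [|n]; first by rewrite !flatmx0.
rewrite pU_S bU_S (mulmxA (Ulift n)) (mulmxA (Ulift n)) mulmxBr mulmx1.
have -> : Ulift n *m Pi n.+1 = 0 by rewrite /Pi mulmxA (bU_Psi n.+1) mul0mx.
by rewrite subr0 Ulift_bd bZ_pinv.
Qed.
Lemma bU_pZ n : bU n *m pZ n = 0.
Proof.
by rewrite /pZ mulmxA !mulmxBr mulmx1 bU_Pi subr0 mulmxA bU_pU mul1mx subrr mul0mx.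
Qed.

Lemma Y_sub n : (1%:M - Pi n - pU n *m bU n <= bZ n)%MS.
Proof.
rewrite /bZ eq_row_base.
have YP : (1%:M - Pi n - pU n *m bU n) *m Psi n = 0.
  by rewrite !mulmxBl mul1mx Pi_Psi subrr -mulmxA bU_Psi mulmx0 subr0.
case: n YP => [|n] YP; first exact: exact0.
apply: exactS => //; rewrite bU_S pU_S.
rewrite mulmxBl -mulmxA Ulift_bd mulmxKpV ?subrr //.
rewrite /bZ eq_row_base /SZ submxMr //; apply/sub_kermxP.
by rewrite mulmxBl mul1mx Pi_Psi subrr.
Qed.

Lemma sum3 n : pX n *m bX n + pZ n *m bZ n + pU n *m bU n = 1%:M.
Proof.
rewrite /pX Pi_bX /pZ mulmxKpV ?Y_sub //.
by rewrite -addrA subrK addrC subrK.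
Qed.


Definition cdc (n i : nat) : nat :=
  match i with 0 => rX n | 1 => rZ n | _ => rU n end.
Definition inclB (n i : nat) : 'M[R]_(cdc n i, cdim C n) :=
  match i return 'M[R]_(cdc n i, cdim C n) with
  | 0 => bX n | 1 => bZ n | _ => bU n end.
Definition projB (n i : nat) : 'M[R]_(cdim C n, cdc n i) :=
  match i return 'M[R]_(cdim C n, cdc n i) with
  | 0 => pX n | 1 => pZ n | _ => pU n end.

Lemma inclB_projB n i j : (i < 3)%N -> (j < 3)%N ->
  inclB n i *m projB n j =
      if i == j then conform_mx 0 (1%:M : 'M[R]_(cdc n i)) else 0.
Proof.
case: i => [|[|[|i]]] // _; case: j => [|[|[|j]]] // _;
  rewrite /= ?conform_mx_id.
- exact: bX_pX.
- exact: bX_pZ.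
- exact: bX_pU.
- exact: bZ_pX.
- exact: bZ_pZ.
- exact: bZ_pU.
- exact: bU_pX.
- exact: bU_pZ.
- exact: bU_pU.
Qed.

Lemma sum_projB n : \sum_(i < 3) projB n i *m inclB n i = 1%:M.
Proof. by rewrite !big_ord_recl big_ord0 addr0 /= addrA sum3. Qed.

Definition Bs : base C := @Base R C (fun _ => 3%N) cdc inclB projB
  (fun n i j => @inclB_projB n i j) sum_projB.


Definition Mr : rel cell := fun a b =>
  [&& a.2 == 2%N, b.2 == 1%N, a.1 == b.1.+1 & (0 < cdc b.1 b.2)%N].

Lemma mx_k0 m k (A : 'M[R]_(m, k)) : k = 0%N -> A = 0.
Proof. move=> e; move: A; rewrite e => A; exact: thinmx0. Qed.
Lemma mx_m0 m k (A : 'M[R]_(m, k)) : m = 0%N -> A = 0.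
Proof. move=> e; move: A; rewrite e => A; exact: flatmx0. Qed.

Lemma dmatE n i j : dmat Bs (n.+1, i) (n, j) = inclB n.+1 i *m bd C n *m projB n j.
Proof. by rewrite /dmat /= eqxx conform_mx_id. Qed.

Lemma bXbd_Pi n : bX n.+1 *m bd C n *m Pi n = bX n.+1 *m bd C n.
Proof. by rewrite -mulmxA -Pi_bd mulmxA bX_Pi. Qed.

Lemma edge_class a b : edge Bs a b ->
  (a.2 = 0%N /\ b.2 = 0%N) \/ (a.2 = 2%N /\ b.2 = 1%N).
Proof.
case: a b => [m i] [n j]; rewrite /edge /valid_cell /=.
case/and4P => vi vj /eqP -> {m}; rewrite dmatE.
case: i vi => [|[|[|i]]] // _; case: j vj => [|[|[|j]]] // _ /=; try by auto.
- by case: (kill (bXbd_Pi n)) => _ ->; rewrite eqxx.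
- by case: (kill (bXbd_Pi n)) => -> _; rewrite eqxx.
- by rewrite bZ_bd mul0mx eqxx.
- by rewrite bZ_bd mul0mx eqxx.
- by rewrite bZ_bd mul0mx eqxx.
- by rewrite Ulift_bd bZ_pX eqxx.
- by rewrite Ulift_bd bZ_pU eqxx.
Qed.


Lemma gM_class a b : gM_edge Bs Mr a b ->
  [/\ a.2 = 0%N, b.2 = 0%N & a.1 = b.1.+1] \/
  [/\ a.2 = 1%N, b.2 = 2%N & b.1 = a.1.+1].
Proof.
case/orP.
  case/andP=> e nM; have e' := e.
  case/and4P: e' => _ _ /eqP d1 dn.
  case: (edge_class e) => [[-> ->]|[a2 b2]]; first by left.
  exfalso; move: nM dn; clear e; case: a b d1 a2 b2 => [m i] [n j] /= -> -> ->.
  rewrite /Mr /= !eqxx /= lt0n negbK => /eqP z.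
  by rewrite (@mx_k0 _ _ (dmat Bs (n.+1, 2%N) (n, 1%N)) z) eqxx.
by case/and4P => /eqP b2 /eqP a2 /eqP d _; right.
Qed.

Lemma pathX s a : a.2 = 0%N -> path (gM_edge Bs Mr) a s ->
  (last a s).2 = 0%N /\ ((last a s).1 + size s)%N = a.1.
Proof.
elim: s a => [|c s IH] a a2 /=; first by rewrite addn0.
case/andP => e p.
case: (gM_class e) => [[_ c2 d]|[a2' _ _]]; last by rewrite a2 in a2'.
case: (IH c c2 p) => -> sz; split => //.
by rewrite addnS sz d.
Qed.

Lemma pathO s a : a.2 <> 0%N -> path (gM_edge Bs Mr) a s ->
  s = [::] \/ exists c, s = [:: c] /\ c.1 = a.1.+1.
Proof.
case: s => [|c s] a2 /=; first by left.
case/andP => e p.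
case: (gM_class e) => [[a2' _ _]|[_ c2 d]]; first by rewrite a2' in a2.
right; exists c; split => //.
case: s p => [|x s] //= /andP [e2 _].
by case: (gM_class e2) => [[c2' _ _]|[c2' _ _]]; rewrite c2 in c2'.
Qed.

Lemma same_deg a s b : gM_path Bs Mr a s b -> a.1 = b.1 -> s = [::].
Proof.
case=> p <-.
have [a2|a2] := eqVneq a.2 0%N.
  case: (pathX a2 p) => _ sz e; move: sz; rewrite -e; clear e.
  by case: s {p} => // c s /=; lia.
case: (pathO (elimN eqP a2) p) => [//|[c [-> d]]] /=.
by rewrite d; lia.
Qed.


Lemma one_neq0 k : (0 < k)%N -> (1%:M : 'M[R]_k) != 0.
Proof.
move=> k0; apply/eqP => H; have := mxrank1 R k.
by rewrite H mxrank0 => k0'; rewrite -k0' in k0.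
Qed.

Lemma reach_same a b : reach Bs Mr a b -> a.1 = b.1 -> a = b.
Proof. by case=> s Hs e; have := same_deg Hs e; case: Hs => _ <- ->. Qed.

Lemma matchingP : morse_matching Bs Mr.
Proof.
split.
- move=> [m i] [n j]; rewrite /Mr /edge /valid_cell /=.
  case/and4P => /eqP -> /eqP -> /eqP -> pos; rewrite !eqxx /=.
  by rewrite dmatE /= Ulift_bd bZ_pZ one_neq0.
- move=> [a1 a2] [b1 b2] [c1 c2] [d1 d2]; rewrite /Mr /=.
  move=> /and4P[/eqP-> /eqP-> /eqP-> _] /and4P[/eqP-> /eqP-> /eqP-> _].
  by case/or4P => /eqP [] ->.
- move=> [m i] [n j]; rewrite /Mr /=.
  case/and4P => /eqP -> /eqP -> /eqP -> pos.
  by rewrite dmatE /= Ulift_bd bZ_pZ /row_free /row_full mxrank1 eqxx.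
- move=> n; split.
  + by move=> a _ _; exists [::].
  + by move=> a b _ _ ea eb rab _; apply: reach_same => //; rewrite ea eb.
  + move=> a b c _ _ _ ea eb ec rab rbc.
    have -> : a = b by apply: reach_same => //; rewrite ea eb.
    have -> : b = c by apply: reach_same => //; rewrite eb ec.
    by exists [::].
Qed.


Lemma Gamma_same a b : a.1 = b.1 -> Gamma Bs Mr a b = pidx Bs Mr a [::] b.
Proof.
move=> e; rewrite /Gamma.
have [eab|nab] := eqVneq a b.
  subst b.
  have -> : [set s | gM_path Bs Mr a s a]%classic = [set [::]]%classic.
    apply/seteqP; split => s /=; first by move=> Hs; exact: same_deg Hs e.
    by move=> ->; split.
  by rewrite fsbig_set1.
have -> : [set s | gM_path Bs Mr a s b]%classic = set0.
  apply/seteqP; split => s //= Hs.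
  have s0 := same_deg Hs e; move: Hs; rewrite s0 => -[_ /= eq].
  by rewrite eq eqxx in nab.
by rewrite fsbig_set0 /= (negbTE nab).
Qed.

Lemma paths_X n s : gM_path Bs Mr (n.+1, 0%N) s (n, 0%N) -> s = [:: (n, 0%N)].
Proof.
case=> p l; have [_ sz] := pathX (erefl 0%N : (n.+1, 0%N).2 = 0%N) p.
move: sz; rewrite l /=; case: s p l => [|c [|d s]] //= p l; try lia.
by move=> _; rewrite l.
Qed.

Lemma Gamma_X n : Gamma Bs Mr (n.+1, 0%N) (n, 0%N) = dmat Bs (n.+1, 0%N) (n, 0%N).
Proof.
rewrite /Gamma.
have [e|ne] := boolP (gM_edge Bs Mr (n.+1, 0%N) (n, 0%N)).
  have -> : [set s | gM_path Bs Mr (n.+1, 0%N) s (n, 0%N)]%classic = [set [:: (n, 0%N)]]%classic.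
    apply/seteqP; split => s /=; first exact: paths_X.
    by move=> ->; split => //=; rewrite e.
  by rewrite fsbig_set1 /= /smat /Mr /= eqxx conform_mx_id mulmx1.
have -> : [set s | gM_path Bs Mr (n.+1, 0%N) s (n, 0%N)]%classic = set0.
  apply/seteqP; split => s //= Hs.
  have s1 := paths_X Hs; case: Hs; rewrite s1 /= => /andP[e _].
  by rewrite e in ne.
rewrite fsbig_set0; move: ne; rewrite /gM_edge /edge /valid_cell /Mr /= !eqxx /=.
by rewrite andbT orbF negbK => /eqP.
Qed.


Lemma crit0 n : critical Bs Mr (n, 0%N).
Proof.
rewrite /critical /valid_cell /=; apply/asboolP => -[b [H|H]]; move: H;
  by rewrite /Mr /= ?andbF.
Qed.

Lemma crit_dim n i : i != 0%N -> critical Bs Mr (n, i) -> cdc n i = 0%N.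
Proof.
move=> i0 /andP[v /asboolP Hn]; move: v; rewrite /valid_cell /=.
case: i i0 Hn => [|[|[|i]]] // _ Hn _.
  apply/eqP; rewrite -leqn0 leqNgt; apply/negP => pos; apply: Hn.
  by exists (n.+1, 2%N); right; rewrite /Mr /= !eqxx pos.
case: n Hn => [|m] Hn //.
apply/eqP; rewrite -leqn0 leqNgt; apply/negP => pos; apply: Hn.
by exists (m, 1%N); left; rewrite /Mr /= !eqxx pos.
Qed.

Lemma crit_listE n : crit_list Bs Mr n = 0%N :: [seq i <- [:: 1%N; 2%N] | critical Bs Mr (n, i)].
Proof. by rewrite /crit_list /= crit0. Qed.

Lemma crit_sum (V : zmodType) n (F : nat -> V) :
  (forall i, i != 0%N -> critical Bs Mr (n, i) -> F i = 0) ->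
  \sum_(i <- crit_list Bs Mr n) F i = F 0%N.
Proof.
move=> HF; rewrite crit_listE big_cons big_filter !big_cons big_nil.
by case: ifP => c1; case: ifP => c2; rewrite ?(HF 1%N) ?(HF 2%N) ?addr0.
Qed.

Lemma cdimM_E n : cdimM Bs Mr n = cdc n 0%N.
Proof.
rewrite /cdimM crit_listE /=.
have H : forall i, i != 0%N -> critical Bs Mr (n, i) -> mdim Bs (n, i) = 0%N.
  by move=> i i0 ci; rewrite /mdim /= crit_dim.
case: ifP => c1; case: ifP => c2 /=; try rewrite (@crit_dim n 1%N isT c1 : rZ n = 0%N); try rewrite (@crit_dim n 2%N isT c2 : rU n = 0%N); by rewrite ?addn0.
Qed.

Lemma offM0 n : offM Bs Mr n 0%N = 0%N.
Proof. by rewrite /offM; elim: (crit_list Bs Mr n). Qed.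

Lemma idm_lemma m k (e : k = m) :
  let A := \matrix_(r < m, c < k) ((c : nat) == r)%:R : 'M[R]_(m, k) in
  A *m A^T = 1%:M /\ A^T *m A = 1%:M.
Proof.
subst k => A.
have -> : A = 1%:M by apply/matrixP => i j; rewrite !mxE eq_sym.
by rewrite trmx1 mulmx1.
Qed.

Definition EM n : 'M[R]_(mdim Bs (n, 0%N), cdimM Bs Mr n) := inclM Bs Mr n 0%N.

Lemma EM_E n : EM n = \matrix_(r, c) ((c : nat) == r)%:R.
Proof. by apply/matrixP => i j; rewrite /EM /inclM !mxE offM0. Qed.

Lemma EET n : EM n *m (EM n)^T = 1%:M.
Proof. by rewrite EM_E; case: (idm_lemma (cdimM_E n)). Qed.
Lemma ETE n : (EM n)^T *m EM n = 1%:M.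
Proof. by rewrite EM_E; case: (idm_lemma (cdimM_E n)). Qed.


Lemma Gam00 n : Gamma Bs Mr (n, 0%N) (n, 0%N) = 1%:M.
Proof. by rewrite Gamma_same //= eqxx conform_mx_id. Qed.

Lemma morse_Phi_E n : morse_Phi Bs Mr n = (EM n)^T *m bX n.
Proof.
rewrite /morse_Phi crit_sum.
  rewrite !big_ord_recl big_ord0 /= Gam00 mulmx1.
  rewrite !Gamma_same //= !xpair_eqE /bump /= !andbF !mulmx0 !mul0mx !addr0.
  done.
move=> i i0 ci; apply: big1 => j _.
by rewrite (@mx_m0 _ _ (Gamma Bs Mr (n, i) (n, val j)) (crit_dim i0 ci)) mulmx0 mul0mx.
Qed.


Lemma morse_Psi_E n : morse_Psi Bs Mr n = pX n *m EM n.
Proof.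
rewrite /morse_Psi.
have H : forall j : 'I_(ncell Bs n),
  \sum_(i <- crit_list Bs Mr n) proj Bs n j *m Gamma Bs Mr (n, val j) (n, i) *m inclM Bs Mr n i
  = proj Bs n j *m Gamma Bs Mr (n, val j) (n, 0%N) *m EM n.
  move=> j; rewrite crit_sum // => i i0 ci.
  by rewrite (@mx_m0 _ _ (inclM Bs Mr n i) (crit_dim i0 ci)) mulmx0.
rewrite (eq_bigr _ (fun j _ => H j)).
rewrite !big_ord_recl big_ord0 /= Gam00 mulmx1.
by rewrite !Gamma_same //= !xpair_eqE /bump /= !addn0 /= !andbF !mulmx0 !mul0mx !addr0.
Qed.

Lemma bdM_E n : bdM Bs Mr n = (EM n.+1)^T *m dmat Bs (n.+1, 0%N) (n, 0%N) *m EM n.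
Proof.
rewrite /bdM crit_sum.
  rewrite crit_sum ?Gamma_X // => j j0 cj.
  by rewrite (@mx_m0 _ _ (inclM Bs Mr n j) (crit_dim j0 cj)) mulmx0.
move=> i i0 ci; apply: big1_seq => j _.
by rewrite (@mx_m0 _ _ (Gamma Bs Mr (n.+1, i) (n, j)) (crit_dim i0 ci)) mulmx0 mul0mx.
Qed.


Lemma inv_iso m k (A : 'M[R]_(m, k)) (B : 'M[R]_(k, m)) :
  A *m B = 1%:M -> B *m A = 1%:M -> row_free A && row_full A.
Proof.
move=> AB BA; rewrite /row_free /row_full.
have h1 := mxrankM_maxl A B; have h2 := mxrankM_maxr B A.
rewrite AB mxrank1 in h1; rewrite BA mxrank1 in h2.
have h3 := rank_leq_row A; have h4 := rank_leq_col A.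
apply/andP; split; apply/eqP; lia.
Qed.

Lemma pX_bX n : pX n *m bX n = Pi n.
Proof. exact: Pi_bX. Qed.

Lemma EETr n p (X : 'M[R]_(p, _)) : X *m EM n *m (EM n)^T = X.
Proof. by rewrite -mulmxA EET mulmx1. Qed.
Lemma ETEr n p (X : 'M[R]_(p, _)) : X *m (EM n)^T *m EM n = X.
Proof. by rewrite -mulmxA ETE mulmx1. Qed.
Lemma pXbXr n p (X : 'M[R]_(p, _)) : X *m pX n *m bX n = X *m Pi n.
Proof. by rewrite -mulmxA pX_bX. Qed.
Lemma bXpXr n p (X : 'M[R]_(p, _)) : X *m bX n *m pX n = X.
Proof. by rewrite -mulmxA bX_pX mulmx1. Qed.

Lemma bXPsiPhir n p (X : 'M[R]_(p, _)) : X *m bX n *m Psi n *m Phi n = X *m bX n.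
Proof. by rewrite -(mulmxA (X *m bX n) (Psi n)) -/(Pi n) -(mulmxA X (bX n)) bX_Pi. Qed.
Lemma Pi_pX n : Pi n *m pX n = pX n.
Proof. by rewrite /pX mulmxA PiPi. Qed.

Definition fM n : 'M[R]_(cdim D n, cdimM Bs Mr n) := Phi n *m pX n *m EM n.

Lemma main_sec : exists (B : base C) (M : rel cell),
    morse_matching B M /\
    equiv_retracts (C' := C) (D' := morse_complex B M)
      Psi Phi (morse_Psi B M) (morse_Phi B M).
Proof.
exists Bs, Mr; split; first exact: matchingP.
exists fM, (fun n => 1%:M); split.
- split.
  + move=> n /=; rewrite bdM_E dmatE /fM /=.
    have hP := @pXbXr n.+1; move: (pX n) (pX n.+1) (bX n.+1) hP => P P2 B2 hP.
    by rewrite !mulmxA EETr hP PhiPi chPhi.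
  + move=> n; apply: (@inv_iso _ _ _ ((EM n)^T *m bX n *m Psi n)).
      have h1 := @pXbXr n; rewrite /fM.
      move: (pX n) (bX n) h1 => P B h1.
      by rewrite !mulmxA EETr h1 PhiPi PhiPsi.
    have h1 := @bXPsiPhir n; have h2 := @bXpXr n; rewrite /fM.
    move: (pX n) (bX n) h1 h2 => P B h1 h2.
    by rewrite !mulmxA h1 h2 ETE.
- split; first by move=> n; rewrite mulmx1 mul1mx.
  by move=> n; rewrite /row_free /row_full mxrank1 !eqxx.
- move=> n; rewrite mul1mx morse_Psi_E /fM.
  by rewrite (mulmxA (Psi n)) (mulmxA (Psi n)) -/(Pi n) Pi_pX.
- move=> n; rewrite mulmx1 morse_Phi_E /fM.
  have h1 := @pXbXr n; move: (pX n) (bX n) h1 => P B h1.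
  by rewrite !mulmxA EETr h1 PhiPi.
Qed.

End Main.

Unset Implicit Arguments.

Theorem mainTheorem1 (R : realType) (C D : chain_complex R)
  (Phi : forall n, 'M[R]_(cdim D n, cdim C n))
  (Psi : forall n, 'M[R]_(cdim C n, cdim D n))
  (h : forall n, 'M[R]_(cdim C n, cdim C n.+1)) :
  is_complex C -> is_complex D ->
  is_chain_map Phi -> is_chain_map Psi ->
  (forall n, Phi n *m Psi n = 1%:M) ->
  h 0%N *m bd C 0%N = 1%:M - Psi 0%N *m Phi 0%N ->
  (forall n, bd C n *m h n + h n.+1 *m bd C n.+1 = 1%:M - Psi n.+1 *m Phi n.+1) ->
  exists (B : base C) (M : rel cell),
    morse_matching B M /\
    equiv_retracts (C' := C) (D' := morse_complex B M)
      Psi Phi (morse_Psi B M) (morse_Phi B M).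
Proof.
move=> cC cD chPhi chPsi PP h0 hS.
exact: (main_sec cC chPhi chPsi PP h0 hS).
Qed.
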